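(* For each pair of integers $s,b\ge1$, the $(s,b)$-Generacci sequence exists and is unique. Moreover, every positive integer has exactly one $(s,b)$-Generacci legal decomposition using terms of the $(s,b)$-Generacci sequence.
   Context: Fix integers $s,b\ge1$. For an increasing sequence of positive integers $(a_i)_{i\ge1}$, the bins are $\mathcal B_n=\{a_{b(n-1)+1},\dots,a_{bn}\}$ for $n\ge1$, and $\mathcal B_n=\emptyset$ for $n\le 0$. An $(s,b)$-Generacci legal decomposition of a positive integer $m$ using this sequence is an expression $m=a_{\ell_1}+\cdots+a_{\ell_k}$ with $a_{\ell_1}>a_{\ell_2}>\cdots>a_{\ell_k}$ such that for all $i$ and all $j$, $\{a_{\ell_i},a_{\ell_{i+1}}\}\not\subset \mathcal B_{j-s}\cup\mathcal B_{j-s+1}\cup\cdots\cup\mathcal B_j$ (so no two summands lie in the same bin, and the bins containing any two summands have at least $s$ bins strictly between them). The $(s,b)$-Generacci sequence is the increasing sequence of positive integers $(a_i)_{i\ge1}$ in which each $a_i$ is the smallest positive integer that has no $(s,b)$-Generacci legal decomposition using only elements of $\{a_1,\dots,a_{i-1}\}$. *)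

(* Defs.v *)
(* Sequences a : nat -> nat are 1-indexed:
   the terms are a 1, a 2, ...; the value a 0 is irrelevant. *)
From mathcomp Require Import all_boot.
Set Implicit Arguments. Unset Strict Implicit. Unset Printing Implicit Defensive.

Definition inBin (b : nat) (a : nat -> nat) (n x : nat) : Prop :=
  exists k, b * (n - 1) < k <= b * n /\ a k = x.

(* x lies in B_(j-s) u ... u B_j ; bins with index <= 0 are empty, so
   only n >= 1 contributes, and windows with j <= 0 are empty. *)
Definition inWindow (s b : nat) (a : nat -> nat) (j x : nat) : Prop :=
  exists n, 1 <= n /\ j - s <= n <= j /\ inBin b a n x.

Definition legalPair (s b : nat) (a : nat -> nat) (x y : nat) : Prop :=
  forall j, ~ (inWindow s b a j x /\ inWindow s b a j y).

Fixpoint legalChain (s b : nat) (a : nat -> nat) (l : seq nat) : Prop :=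
  match l with
  | x :: ((y :: _) as t) => legalPair s b a x y /\ legalChain s b a t
  | _ => True
  end.

Definition legalDec (s b : nat) (a : nat -> nat) (P : nat -> Prop)
  (m : nat) (l : seq nat) : Prop :=
  sorted (fun x y => y < x) l /\ (forall x, x \in l -> P x) /\
  sumn l = m /\ legalChain s b a l.

Definition termBefore (a : nat -> nat) (i x : nat) : Prop :=
  exists k, 1 <= k < i /\ a k = x.

Definition isTerm (a : nat -> nat) (x : nat) : Prop :=
  exists k, 1 <= k /\ a k = x.

Definition hasLegalDecBefore (s b : nat) (a : nat -> nat) (i m : nat) : Prop :=
  exists l, legalDec s b a (termBefore a i) m l.

Definition isGeneracci (s b : nat) (a : nat -> nat) : Prop :=
  (forall i, 1 <= i -> 0 < a i) /\
  (forall i, 1 <= i -> a i < a i.+1) /\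
  (forall i, 1 <= i ->
     ~ hasLegalDecBefore s b a i (a i) /\
     (forall m, 0 < m < a i -> hasLegalDecBefore s b a i m)).

(* Main.v *)
Require Import Defs.
From mathcomp Require Import all_boot zify.
Set Implicit Arguments. Unset Strict Implicit.

Definition bn (b k : nat) := k.-1 %/ b + 1.

Lemma bnP b k : 0 < b -> 0 < k -> b * (bn b k - 1) < k <= b * bn b k.
Proof.
move=> hb hk; rewrite /bn addnK.
have e := divn_eq k.-1 b; have r := ltn_pmod k.-1 hb.
move: e r; set q := _ %/ _; set r := _ %% _ => e hr.
nia.
Qed.

Lemma bn_uniq b k n : 0 < b -> b * (n - 1) < k <= b * n -> bn b k = n.
Proof.
move=> hb /andP[h1 h2].
have hk : 0 < k by lia.
have /andP[h3 h4] := bnP hb hk.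
move: h1 h2 h3 h4; set c := bn b k => h1 h2 h3 h4.
nia.
Qed.

Lemma bn_pos b k : 1 <= bn b k.
Proof. by rewrite /bn addn1. Qed.

Lemma bn_mono b k k' : k' <= k -> bn b k' <= bn b k.
Proof. move=> h; rewrite /bn leq_add2r; apply: leq_div2r; lia. Qed.

Definition Nk s b k := b * (bn b k - s - 1).

Lemma Nk_lt s b k : 0 < b -> 0 < k -> Nk s b k < k.
Proof.
move=> hb hk; have /andP[h1 _] := bnP hb hk.
rewrite /Nk; apply: leq_ltn_trans h1; apply: leq_mul => //; lia.
Qed.

Lemma Nk_bin s b k k' : 0 < b -> 0 < k' -> k' <= Nk s b k -> bn b k' + s < bn b k.
Proof.
move=> hb hk' h; have /andP[h1 _] := bnP hb hk'.
move: h h1; rewrite /Nk; set c := bn b k; set c' := bn b k' => h h1.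
nia.
Qed.

Lemma bin_Nk s b k k' : 0 < b -> 0 < k' -> bn b k' + s < bn b k -> k' <= Nk s b k.
Proof.
move=> hb hk' h; have /andP[_ h1] := bnP hb hk'.
apply: (leq_trans h1); rewrite /Nk; apply: leq_mul => //; lia.
Qed.

Definition incr (a : nat -> nat) := forall i, 1 <= i -> a i < a i.+1.

Lemma mono a i j : incr a -> 1 <= i -> i < j -> a i < a j.
Proof.
move=> inc hi; elim: j => // j IH hj.
case: (ltnP i j) => h.
- exact: ltn_trans (IH h) (inc _ (leq_trans hi (ltnW h))).
- have e : i = j by lia. by subst i; apply: inc.
Qed.

Lemma mono_le a i j : incr a -> 1 <= i -> i <= j -> a i <= a j.
Proof.
move=> inc hi; rewrite leq_eqVlt => /orP[/eqP->//|h]; exact: ltnW (mono inc hi h).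
Qed.

Lemma mono_refl a i j : incr a -> 1 <= i -> 1 <= j -> a i < a j -> i < j.
Proof.
move=> inc hi hj h; case: (ltnP i j) => // h'.
have := mono_le inc hj h'; lia.
Qed.

Lemma mono_inj a i j : incr a -> 1 <= i -> 1 <= j -> a i = a j -> i = j.
Proof.
move=> inc hi hj h; case: (ltngtP i j) => // h'.
- have := mono inc hi h'; lia.
- have := mono inc hj h'; lia.
Qed.

Lemma inBin_term b a n k : 0 < b -> incr a -> 0 < k ->
  inBin b a n (a k) <-> bn b k = n.
Proof.
move=> hb inc hk; split.
- case=> k0 [/andP[h1 h2] e].
  have hk0 : 0 < k0 by lia.
  have ek := mono_inj inc hk0 hk e; subst k0.
  apply: bn_uniq => //; lia.
- move=> <-; exists k; split => //; exact: bnP.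
Qed.

Lemma legal_iff s b a k k' : 0 < b -> incr a -> 0 < k -> 0 < k' ->
  legalPair s b a (a k) (a k') <-> (bn b k' + s < bn b k \/ bn b k + s < bn b k').
Proof.
move=> hb inc hk hk'; split.
- move=> hL.
  case: (ltnP (bn b k' + s) (bn b k)) => h1; first by left.
  case: (ltnP (bn b k + s) (bn b k')) => h2; first by right.
  exfalso; case: (leqP (bn b k') (bn b k)) => h3.
  + apply: (hL (bn b k)); split.
    * exists (bn b k); split; first exact: bn_pos.
      split; first lia. by apply/inBin_term.
    * exists (bn b k'); split; first exact: bn_pos.
      split; first lia. by apply/inBin_term.
  + apply: (hL (bn b k')); split.
    * exists (bn b k); split; first exact: bn_pos.
      split; first lia. by apply/inBin_term.
    * exists (bn b k'); split; first exact: bn_pos.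
      split; first lia. by apply/inBin_term.
- move=> h j [[n1 [h1 [h2 /(inBin_term _ hb inc hk) e1]]] [n2 [h3 [h4 /(inBin_term _ hb inc hk') e2]]]].
  lia.
Qed.

Definition recP s b (a : nat -> nat) :=
  forall k, 1 <= k -> a k + a (Nk s b k).+1 <= a k.+1.

Lemma ubound s b a : 0 < b -> incr a -> recP s b a ->
  forall t k, 1 <= k -> path (fun x y => y < x) (a k) t ->
  (forall x, x \in t -> isTerm a x) -> legalChain s b a (a k :: t) ->
  a k + sumn t < a k.+1.
Proof.
move=> hb inc rec; elim=> [|y t IH] k hk /=.
- move=> _ _ _; rewrite addn0; exact: inc.
- move=> /andP[hy hp] hT [hL hC].
  have [k' [hk' ey]] := hT y (mem_head _ _). subst y.
  have kk : k' < k := mono_refl inc hk' hk hy.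
  have hbk : bn b k' + s < bn b k.
    case/(legal_iff _ hb inc hk hk'): hL => // h.
    have := bn_mono b (ltnW kk); lia.
  have hN := bin_Nk hb hk' hbk.
  have hT' : forall x, x \in t -> isTerm a x.
    by move=> x hx; apply: hT; rewrite inE hx orbT.
  have := IH k' hk' hp hT' hC.
  have := mono_le inc (ltn0Sn k') (hN : k'.+1 <= (Nk s b k).+1).
  have := rec k hk. lia.
Qed.

Lemma termBefore_mono a i j x : termBefore a i x -> i <= j -> termBefore a j x.
Proof. move=> [k [/andP[h1 h2] e]] hij; exists k; split => //; lia. Qed.

Lemma termBefore_isTerm a i x : termBefore a i x -> isTerm a x.
Proof. move=> [k [/andP[h1 h2] e]]; by exists k. Qed.

Lemma prepend s b a k m l : 0 < b -> incr a -> 1 <= k ->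
  legalDec s b a (termBefore a (Nk s b k).+1) m l ->
  legalDec s b a (termBefore a k.+1) (a k + m) (a k :: l).
Proof.
move=> hb inc hk [hs [hP [hm hC]]].
have hNk := Nk_lt s hb hk.
split; last split; last split.
- case: l hs hP hC {hm} => [|y t] //= hs hP hC; rewrite hs andbT.
  have [k'' [/andP[h1 h2] <-]] := hP y (mem_head _ _).
  apply: mono inc h1 _; lia.
- move=> x; rewrite inE => /orP[/eqP->|hx].
  + exists k; split => //; lia.
  + apply: termBefore_mono (hP x hx) _; lia.
- by rewrite /= hm.
- case: l hs hP hC {hm} => [|y t] //= hs hP hC; split => //.
  have [k'' [/andP[h1 h2] <-]] := hP y (mem_head _ _).
  apply/(legal_iff _ hb inc hk h1); left; apply: Nk_bin => //; lia.
Qed.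

Lemma gen_incr s b a : isGeneracci s b a -> incr a.
Proof. by case=> _ []. Qed.

Lemma gen_rec s b a : 0 < b -> isGeneracci s b a -> recP s b a.
Proof.
move=> hb hG k hk; have inc := gen_incr hG.
case: hG => hpos [_ hcl].
case: (leqP (a k + a (Nk s b k).+1) (a k.+1)) => // hlt; exfalso.
have hkk := inc k hk.
have [l hl] : hasLegalDecBefore s b a (Nk s b k).+1 (a k.+1 - a k).
  apply: (hcl (Nk s b k).+1 (ltn0Sn _)).2; lia.
have := prepend hb inc hk hl.
rewrite subnKC; last exact: ltnW.
move=> h; apply: (hcl k.+1 (ltn0Sn _)).1; by exists (a k :: l).
Qed.

Lemma head_bound s b a x t m : 0 < b -> incr a -> recP s b a ->
  legalDec s b a (isTerm a) m (x :: t) ->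
  exists k, 1 <= k /\ x = a k /\ a k <= m < a k.+1.
Proof.
move=> hb inc rec [hs [hP [hm hC]]].
have [k [hk ex]] := hP x (mem_head _ _); subst x.
exists k; split => //; split => //.
have hT : forall y, y \in t -> isTerm a y.
  by move=> y hy; apply: hP; rewrite inE hy orbT.
have := ubound hb inc rec hk hs hT hC.
move: hm => /= <-; lia.
Qed.

Lemma dec_uniq s b a : 0 < b -> incr a -> (forall i, 1 <= i -> 0 < a i) -> recP s b a ->
  forall l1 l2 m, legalDec s b a (isTerm a) m l1 -> legalDec s b a (isTerm a) m l2 -> l1 = l2.
Proof.
move=> hb inc pos rec; elim=> [|x t IH] l2 m.
- move=> [_ [_ [/= hm _]]]; case: l2 => // y t2 h2.
  have [k [hk [ey hh]]] := head_bound hb inc rec h2.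
  have := pos k hk; lia.
- move=> h1; case: l2 => [|y t2] h2.
  + have [k [hk [ex hh]]] := head_bound hb inc rec h1.
    case: h2 => [_ [_ [/= hm _]]]; have := pos k hk; lia.
  + have [k [hk [ex hh]]] := head_bound hb inc rec h1.
    have [k' [hk' [ey hh']]] := head_bound hb inc rec h2.
    have ekk : k = k'.
      case: (ltngtP k k') => // hkk.
      * have := mono_le inc (ltn0Sn k) hkk; lia.
      * have := mono_le inc (ltn0Sn k') hkk; lia.
    subst k' x y.
    case: h1 => [hs1 [hP1 [hm1 hC1]]]; case: h2 => [hs2 [hP2 [hm2 hC2]]].
    congr (_ :: _); apply: (IH _ (m - a k)).
    * split; first by case: (t) hs1 => //= z u /andP[].
      split; first by move=> z hz; apply: hP1; rewrite inE hz orbT.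
      split; first by move: hm1 => /= <-; lia.
      by case: (t) hC1 => //= z u [].
    * split; first by case: (t2) hs2 => //= z u /andP[].
      split; first by move=> z hz; apply: hP2; rewrite inE hz orbT.
      split; first by move: hm2 => /= <-; lia.
      by case: (t2) hC2 => //= z u [].
Qed.

Lemma transfer s b a a' i m l : 0 < b -> incr a -> incr a' ->
  (forall k, 1 <= k < i -> a k = a' k) ->
  legalDec s b a (termBefore a i) m l -> legalDec s b a' (termBefore a' i) m l.
Proof.
move=> hb inc inc' ag [hs [hP [hm hC]]].
have hP' : forall x, x \in l -> termBefore a' i x.
  move=> x /hP [k [hk <-]]; exists k; split => //; by rewrite ag.
split => //; split => //; split => //.
elim: l hP hC {hs hm hP'} => [|x t IH] hP //.
case: t IH hP => [|y t] IH hP //= [hL hC]; split; last first.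
  apply: IH => //; move=> z hz; apply: (hP); by rewrite inE hz orbT.
have [k [/andP[hk1 hk2] ex]] := hP x (mem_head _ _).
have [k' [/andP[hk1' hk2'] ey]] : termBefore a i y by apply: (hP); rewrite !inE eqxx orbT.
subst x y.
move/(legal_iff _ hb inc hk1 hk1'): hL.
rewrite ag ?hk1 // ag ?hk1' //.
by move/(legal_iff _ hb inc' hk1 hk1').
Qed.

Lemma gen_unique s b a a' : 0 < b -> isGeneracci s b a -> isGeneracci s b a' ->
  forall i, 1 <= i -> a' i = a i.
Proof.
move=> hb hG hG'.
have inc := gen_incr hG; have inc' := gen_incr hG'.
case: hG => pos [_ hcl]; case: hG' => pos' [_ hcl'].
suff H : forall n i, 1 <= i <= n -> a' i = a i by move=> i hi; apply: (H i); lia.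
elim=> [|n IH] i hi; first lia.
have ag : forall k, 1 <= k < i -> a k = a' k.
  move=> k hk; symmetry; apply: IH; lia.
have ag' : forall k, 1 <= k < i -> a' k = a k by move=> k hk; rewrite ag.
have hi1 : 1 <= i by lia.
case: (ltngtP (a i) (a' i)) => // h.
- have [l hl] := (hcl' i hi1).2 (a i) (ltac:(have := pos i hi1; lia)).
  exfalso; apply: (hcl i hi1).1; exists l; exact: transfer hb inc' inc ag' hl.
- have [l hl] := (hcl i hi1).2 (a' i) (ltac:(have := pos' i hi1; lia)).
  exfalso; apply: (hcl' i hi1).1; exists l; exact: transfer hb inc inc' ag hl.
Qed.

Fixpoint A s b (f k : nat) : nat :=
  match f with
  | 0 => 1
  | f'.+1 => if k <= 1 then 1 else A s b f' k.-1 + A s b f' (Nk s b k.-1).+1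
  end.

Lemma A_pos s b f k : 0 < A s b f k.
Proof. elim: f k => [|f IH] k //=; case: ifP => // _; rewrite addn_gt0 IH. done. Qed.

Lemma A_stable s b f : 0 < b -> forall f' k, k <= f -> k <= f' -> A s b f k = A s b f' k.
Proof.
move=> hb; elim: f => [|f IH] f' k hf hf'.
- have -> : k = 0 by lia. by case: f' hf'.
- case: f' hf' => [|f'] hf'.
  + have -> : k = 0 by lia. done.
  + rewrite /=; case: ifP => // hk.
    have hk1 : 0 < k.-1 by lia.
    have := Nk_lt s hb hk1 => hN.
    rewrite (IH f' k.-1) ?(IH f' (Nk s b k.-1).+1) //; lia.
Qed.

Lemma A_succ s b f k : A s b f.+1 k = if k <= 1 then 1 else A s b f k.-1 + A s b f (Nk s b k.-1).+1.
Proof. by []. Qed.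

Definition seqA s b k := A s b k k.

Lemma seqA_rec s b k : 0 < b -> 1 <= k -> seqA s b k.+1 = seqA s b k + seqA s b (Nk s b k).+1.
Proof.
move=> hb hk; rewrite /seqA A_succ.
have -> : (k.+1 <= 1) = false by lia.
have hN := Nk_lt s hb hk.
congr (_ + _); apply: A_stable => //.
Qed.

Lemma legalDec_mono s b a (P Q : nat -> Prop) m l :
  (forall x, P x -> Q x) -> legalDec s b a P m l -> legalDec s b a Q m l.
Proof. move=> hPQ [h1 [h2 h3]]; split => //; split => // x hx; exact: hPQ (h2 x hx). Qed.

Lemma seqA_gen s b : 0 < b -> isGeneracci s b (seqA s b).
Proof.
move=> hb; set a := seqA s b.
have pos : forall i, 1 <= i -> 0 < a i by move=> i _; exact: A_pos.
have inc : incr a.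
  move=> i hi; rewrite /a seqA_rec //; have := A_pos s b (Nk s b i).+1 (Nk s b i).+1.
  rewrite /seqA; lia.
have rec : recP s b a.
  by move=> k hk; rewrite /a (seqA_rec s hb hk).
have a1 : a 1 = 1 by [].
split => //; split => //.
move=> i hi; split.
- move=> [[|x t] [hs [hP [hm hC]]]].
  + have := pos i hi; move: hm => /= <-; lia.
  + have [k [/andP[hk1 hk2] ex]] := hP x (mem_head _ _); subst x.
    have hT : forall y, y \in t -> isTerm a y.
      by move=> y hy; apply: termBefore_isTerm; apply: (hP); rewrite inE hy orbT.
    have := ubound hb inc rec hk1 hs hT hC.
    have := mono_le inc (ltn0Sn k) hk2.
    move: hm => /= ->; lia.
- suff E : forall n j, j <= n -> forall m, 0 < m < a j.+1 -> hasLegalDecBefore s b a j.+1 m.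
    by move=> m hm; have := E i.-1 i.-1 (leqnn _) m; rewrite prednK //; apply.
  elim=> [|n IH] j hj m hm.
  + have e : j = 0 by lia.
    subst j; move: hm; rewrite a1; lia.
  + case: j hj hm => [|k] hj hm; first by move: hm; rewrite a1; lia.
    move: hm; rewrite /a seqA_rec // -/a => hm.
    case: (ltnP m (a k.+1)) => hmk.
    * have [l hl] := IH k ltac:(lia) m ltac:(lia).
      exists l; apply: legalDec_mono hl => x hx; apply: termBefore_mono hx _; lia.
    * have hN := Nk_lt s hb (ltn0Sn k).
      have [l hl] : hasLegalDecBefore s b a (Nk s b k.+1).+1 (m - a k.+1).
        case hd: (m - a k.+1) => [|d].
        -- exists [::]; split => //.
        -- apply: IH; lia.
      exists (a k.+1 :: l); have := prepend hb inc (ltn0Sn k) hl.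
      by rewrite subnKC.
Qed.

Lemma grow a : incr a -> (forall i, 1 <= i -> 0 < a i) -> forall i, 1 <= i -> i <= a i.
Proof.
move=> inc pos; elim=> // i IH hi.
case: i IH hi => [|i] IH hi; first exact: pos.
have := IH (ltn0Sn i); have := inc i.+1 (ltn0Sn i); lia.
Qed.

Unset Implicit Arguments.

Theorem mainTheorem3 (s b : nat) (hs : 1 <= s) (hb : 1 <= b) :
  (exists a : nat -> nat, isGeneracci s b a /\
     forall a' : nat -> nat, isGeneracci s b a' ->
       forall i, 1 <= i -> a' i = a i) /\
  (forall a : nat -> nat, isGeneracci s b a ->
     forall m, 0 < m -> exists! l : seq nat, legalDec s b a (isTerm a) m l).
Proof.
split.
- exists (seqA s b); split; first exact: seqA_gen.
  move=> a' hG'; exact: gen_unique hb (seqA_gen s hb) hG'.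
- move=> a hG m hm.
  have inc := gen_incr hG; have rec := gen_rec hb hG.
  have pos : forall i, 1 <= i -> 0 < a i by case: hG.
  have [l hl] : hasLegalDecBefore s b a m.+1 m.
    case: hG => _ [_ hcl]; apply: (hcl m.+1 (ltn0Sn _)).2.
    have := grow inc pos (ltn0Sn m); lia.
  exists l; split.
  + apply: legalDec_mono hl => x; exact: termBefore_isTerm.
  + move=> l' hl'; apply: (dec_uniq hb inc pos rec) hl'.
    apply: legalDec_mono hl => x; exact: termBefore_isTerm.
Qed.
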